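(* Let $G$ be a bipartite graph and $M$ a matching of $G$. Let $C$ be an $M$-cycle of $G$ and let $P = P[x,y]$ be an $M$-path in $G - V(C)$. Put $n = |C|/2$ and assume that $e_G(\{x,y\}, V(C)) > n$. Then for each $i$ with $1 \le i \le n$, the induced subgraph $G[V(P)\cup V(C)]$ contains an $M$-cycle of length $|P| + 2i$.
   Context: Graphs are finite and simple. A cycle $C$ is an $M$-cycle if $|E(C)\cap M|=|C|/2$. An $M$-path $P[x,y]$ is a path with ends $x$ and $y$ whose edges alternate between edges of $M$ and edges not in $M$, beginning and ending with edges of $M$. $|P|$ and $|C|$ denote numbers of vertices. For disjoint vertex sets $S,T$, $e_G(S,T)$ is the number of edges of $G$ between $S$ and $T$. *)

(* Defs.v *)
From mathcomp Require Import all_boot.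
Set Implicit Arguments. Unset Strict Implicit. Unset Printing Implicit Defensive.

Section Defs.
Variable T : finType.

Definition simple_graph (e : rel T) : Prop :=
  symmetric e /\ irreflexive e.

Definition bipartite (e : rel T) : Prop :=
  exists f : T -> bool, forall u v, e u v -> f u != f v.

Definition matching (e m : rel T) : Prop :=
  [/\ symmetric m, (forall u v, m u v -> e u v) &
      (forall u v w, m u v -> m u w -> v = w)].

Definition is_cycle (e : rel T) (c : seq T) : bool :=
  [&& uniq c, 3 <= size c & cycle e c].

(* |E(C) ∩ M| = |C|/2 ; edges of C are {x, next c x}, x in c *)
Definition M_cycle (e m : rel T) (c : seq T) : bool :=
  is_cycle e c && (count (fun x => m x (next c x)) c == (size c)./2).

(* p lists the vertices of an M-path P[x,y] from x to y: a path whose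
   edges alternate between M and non-M, first and last edge in M. *)
Definition M_path (e m : rel T) (x y : T) (p : seq T) : bool :=
  [&& 2 <= size p, head x p == x, last x p == y, uniq p, ~~ odd (size p) &
      all (fun i => e (nth x p i) (nth x p i.+1) &&
                    (m (nth x p i) (nth x p i.+1) == ~~ odd i))
          (iota 0 (size p).-1)].

(* e_G({x,y}, S) for x != y, S given as duplicate-free list *)
Definition e_between2 (e : rel T) (x y : T) (s : seq T) : nat :=
  count (e x) s + count (e y) s.

End Defs.

(* Main.v *)
Require Import Defs.
From mathcomp Require Import all_boot.
From mathcomp Require Import zify.
Set Implicit Arguments. Unset Strict Implicit. Unset Printing Implicit Defensive.

Lemma count_iota_sum (a : pred nat) n :
  count a (iota 0 n) = \sum_(0 <= k < n) a k.
Proof.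
elim: n => [|n IH]; first by rewrite big_geq.
have -> : iota 0 n.+1 = iota 0 n ++ [:: n] by rewrite -addn1 iotaD.
by rewrite big_nat_recr //= count_cat IH /= addn0.
Qed.

Lemma sum_shift1 (h : nat -> nat) n : h n = h 0 ->
  \sum_(0 <= j < n) h j.+1 = \sum_(0 <= j < n) h j.
Proof.
move=> hn.
have A : \sum_(0<=i<n.+1) h i = h 0 + \sum_(0<=i<n) h i.+1 by rewrite big_nat_recl.
have B : \sum_(0<=i<n.+1) h i = \sum_(0<=i<n) h i + h n by rewrite big_nat_recr.
lia.
Qed.

Lemma sum_shift (h : nat -> nat) n : (forall j, h (j + n) = h j) ->
  forall s, \sum_(0 <= j < n) h (j + s) = \sum_(0 <= j < n) h j.
Proof.
move=> hp; elim=> [|s IH].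
  by apply: eq_bigr => j _; rewrite addn0.
rewrite -IH -(@sum_shift1 (fun j => h (j + s)) n) /=; last first.
  by rewrite add0n addnC hp.
by apply: eq_bigr => j _; rewrite addnS addSn.
Qed.

Lemma sum_pairs (g : nat -> nat) n :
  \sum_(0 <= k < n.*2) g k = \sum_(0 <= j < n) (g j.*2 + g j.*2.+1).
Proof.
elim: n => [|n IH]; first by rewrite !big_geq.
rewrite doubleS big_nat_recr // big_nat_recr // IH big_nat_recr //= addnA.
reflexivity.
Qed.

Lemma sum_le1 (t : nat -> nat) n : (forall j, j < n -> t j <= 1) ->
  \sum_(0 <= j < n) t j <= n.
Proof.
elim: n => [|n IH] ht; first by rewrite big_geq.
rewrite big_nat_recr //=.
have := IH (fun j jn => ht j (ltnW jn)); have := ht n (ltnSn n); lia.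
Qed.

Lemma sum_tight (t : nat -> nat) n : (forall j, j < n -> t j <= 1) ->
  \sum_(0 <= j < n) t j = n -> forall j, j < n -> t j = 1.
Proof.
elim: n => [|n IH] ht hs j hj //.
move: hs; rewrite big_nat_recr //= => hs.
have h1 : \sum_(0 <= j < n) t j <= n.
  by apply: sum_le1 => k kn; apply: ht; apply: ltnW.
have h2 := ht n (ltnSn n).
have e1 : \sum_(0 <= j < n) t j = n by lia.
have e2 : t n = 1 by lia.
case: (ltngtP j n) => [jn|jn|->] //; last by lia.
by apply: IH => // k kn; apply: ht; apply: ltnW.
Qed.

Lemma pigeon (a b : nat -> bool) n :
  n < \sum_(0 <= j < n) (a j + b j) -> exists2 j, j < n & a j && b j.
Proof.
move=> H; case: (boolP [exists j : 'I_n, a j && b j]).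
  by case/existsP => j hj; exists j.
move/existsPn => hn.
have : \sum_(0 <= j < n) (a j + b j) <= n.
  apply: sum_le1 => j jn; have := hn (Ordinal jn) => /=.
  by case: (a j); case: (b j).
lia.
Qed.
Section S.
Variable T : eqType.

Lemma next_nth_uniq (s : seq T) x0 k : uniq s -> k < size s ->
  next s (nth x0 s k) = nth x0 s (k.+1 %% size s).
Proof.
move=> us ks; rewrite next_nth mem_nth //.
case: s us ks => [|y s'] // us ks.
rewrite index_uniq // /=.
rewrite /= in ks.
case: (ltngtP k.+1 (size s').+1) => h.
- by rewrite modn_small //; apply: set_nth_default; lia.
- lia.
- rewrite h modnn /= nth_default //; lia.
Qed.

Lemma cycle_nthP (e : rel T) (s : seq T) x0 : uniq s ->
  cycle e s <-> (forall k, k < size s -> e (nth x0 s k) (nth x0 s (k.+1 %% size s))).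
Proof.
move=> us; split.
  move=> cy k ks; rewrite -next_nth_uniq //; apply: next_cycle cy _.
  exact: mem_nth.
move=> H; apply: cycle_from_next => // z zs.
have := H (index z s); rewrite index_mem nth_index // => /(_ zs).
by rewrite -next_nth_uniq ?index_mem // nth_index.
Qed.

Lemma count_next_nth (r : rel T) (s : seq T) x0 : uniq s ->
  count (fun z => r z (next s z)) s =
  count (fun k => r (nth x0 s k) (nth x0 s (k.+1 %% size s))) (iota 0 (size s)).
Proof.
move=> us.
transitivity (count (fun z => r z (next s z)) (map (nth x0 s) (iota 0 (size s)))).
  by rewrite -/(mkseq (nth x0 s) (size s)) mkseq_nth.
rewrite count_map; apply: eq_in_count => k; rewrite mem_iota add0n => ks /=.
by rewrite next_nth_uniq.
Qed.

End S.

Lemma count_even n : count (fun k => ~~ odd k) (iota 0 n.*2) = n.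
Proof.
elim: n => [|n IH] //.
have -> : iota 0 (n.+1).*2 = iota 0 n.*2 ++ [:: n.*2; n.*2.+1].
  by rewrite doubleS -addn2 iotaD.
rewrite count_cat IH /= odd_double. lia.
Qed.

Lemma mcycle_mkseq (T : finType) (e m : rel T) (G : nat -> T) K :
  3 <= K -> ~~ odd K -> (forall a b, a < K -> b < K -> G a = G b -> a = b) ->
  (forall k, k < K -> e (G k) (G (k.+1 %% K)) && (m (G k) (G (k.+1 %% K)) == ~~ odd k)) ->
  M_cycle e m (mkseq G K).
Proof.
move=> K3 evK inj H.
have us : uniq (mkseq G K).
  rewrite map_inj_in_uniq ?iota_uniq // => a b; rewrite !mem_iota !add0n => /andP[_ ha] /andP[_ hb].
  exact: inj.
have nthG : forall k, k < K -> nth (G 0) (mkseq G K) k = G k.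
  by move=> k kK; rewrite nth_mkseq.
rewrite /M_cycle /is_cycle size_mkseq us K3 /=.
apply/andP; split.
  apply/(cycle_nthP _ (G 0) us) => k; rewrite size_mkseq => kK.
  rewrite !nthG ?ltn_pmod //; last lia.
  by case/andP: (H k kK).
rewrite (count_next_nth _ (G 0) us) size_mkseq.
rewrite (@eq_in_count _ _ (fun k => ~~ odd k)); last first.
  move=> k; rewrite mem_iota add0n => /andP[_ kK].
  rewrite !nthG ?ltn_pmod //; last lia.
  by case/andP: (H k kK) => _ /eqP.
have -> : K = (K./2).*2 by have := odd_double_half K; rewrite (negbTE evK) add0n.
by rewrite count_even doubleK.
Qed.

Lemma core (T : finType) (e m : rel T) (C P : nat -> T) n L i :
  symmetric e -> symmetric m -> (forall u v w, m u v -> m u w -> v = w) ->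
  0 < n ->
  (forall k, e (C k) (C k.+1)) ->
  (forall k, m (C k) (C k.+1) = ~~ odd k) ->
  (forall k, C (k + n.*2) = C k) ->
  (forall a u v, u < n.*2 -> v < n.*2 -> C (a + u) = C (a + v) -> u = v) ->
  2 <= L -> ~~ odd L ->
  (forall k, k.+1 < L -> e (P k) (P k.+1) && (m (P k) (P k.+1) == ~~ odd k)) ->
  (forall a b, a < L -> b < L -> P a = P b -> a = b) ->
  (forall a b, a < L -> P a != C b) ->
  (forall k, e (P 0) (C k) -> ~~ odd k) ->
  (forall k, e (P L.-1) (C k) -> odd k) ->
  n < \sum_(0 <= k < n.*2) (e (P 0) (C k) + e (P L.-1) (C k)) ->
  1 <= i <= n ->
  exists c', [/\ M_cycle e m c',
     (forall z, z \in c' -> (exists2 a, a < L & z = P a) \/ exists b, z = C b)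
     & size c' = L + 2 * i].
Proof.
move=> esym msym mfun n0 eC mC Cper Cinj L2 evL eP Pinj PC hx hy Hsum /andP[i1 iN].
set x := P 0 in hx Hsum; set y := P L.-1 in hy Hsum.
have ey0 : forall k, ~~ odd k -> e y (C k) = false.
  by move=> k hk; apply/negP => /hy; rewrite (negbTE hk).
have ex0 : forall k, odd k -> e x (C k) = false.
  by move=> k hk; apply/negP => /hx; rewrite hk.
rewrite sum_pairs in Hsum.
have E1 : \sum_(0 <= j < n) (e x (C j.*2) + e y (C j.*2) + (e x (C j.*2.+1) + e y (C j.*2.+1)))
   = \sum_(0 <= j < n) (e x (C j.*2) + e y (C (j + i.-1).*2.+1)).
  have SS : \sum_(0<=j<n) (e y (C (j + i.-1).*2.+1) : nat) = \sum_(0<=j<n) (e y (C j.*2.+1) : nat).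
    apply: (@sum_shift (fun j => e y (C j.*2.+1))) => j /=.
    have -> : (j + n).*2.+1 = j.*2.+1 + n.*2 by lia.
    by rewrite Cper.
  transitivity (\sum_(0 <= j < n) (e x (C j.*2) + e y (C j.*2.+1))).
    apply: eq_bigr => j _.
    by rewrite (ey0 j.*2) ?odd_double // (ex0 j.*2.+1) /= ?odd_double // addn0 add0n.
  by rewrite !big_split /= SS.
rewrite E1 in Hsum.
case: (pigeon Hsum) => j0 j0n /andP[exa eyb].
have [l Ll] : exists l, L = l.*2.
  by exists L./2; have := odd_double_half L; rewrite (negbTE evL) add0n.
set a := j0.*2.
set K := L + 2 * i.
pose G k := if k < L then P k else C (a + (K.-1 - k)).
have GP : forall k, k < L -> G k = P k by move=> k kL; rewrite /G kL.
have GC : forall k, L <= k -> G k = C (a + (K.-1 - k)).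
  by move=> k kL; rewrite /G ltnNge kL.
have eyb' : e y (C (a + (K.-1 - L))).
  have -> : a + (K.-1 - L) = (j0 + i.-1).*2.+1 by rewrite /a /K; lia.
  exact: eyb.
exists (mkseq G K); split; last by rewrite size_mkseq.
- apply: mcycle_mkseq.
  + rewrite /K; lia.
  + by rewrite /K oddD Ll odd_double oddM.
  + move=> u v uK vK.
    case: (ltnP u L) => uL; case: (ltnP v L) => vL.
    * by rewrite !GP //; apply: Pinj.
    * by rewrite (GP u) // (GC v) // => /eqP; rewrite (negbTE (PC _ _ uL)).
    * by rewrite (GP v) // (GC u) // => hh; move: (PC _ (a + (K.-1 - u)) vL); rewrite hh eqxx.
    * rewrite (GC u) // (GC v) // => /Cinj; rewrite /K => hh.
      have := hh ltac:(lia) ltac:(lia); lia.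
  + move=> k kK.
    have mP : m (P L.-2) (P L.-1).
      by case/andP: (eP L.-2 ltac:(lia)) => _; rewrite Ll /=; case: l Ll => [|l'] Ll; [lia| rewrite doubleS /= odd_double => /eqP].
    have mP0 : m (P 0) (P 1) by case/andP: (eP 0 ltac:(lia)) => _ /eqP.
    case: (ltngtP k.+1 K) => hk; [| lia |].
    * rewrite (modn_small hk).
      case: (ltngtP k.+1 L) => hkL.
      -- by rewrite !GP //; [apply: eP | lia].
      -- have kL : L <= k by lia.
         rewrite !GC //; last by lia.
         have -> : a + (K.-1 - k) = (a + (K.-1 - k.+1)).+1 by rewrite /K; lia.
         set t := a + (K.-1 - k.+1).
         rewrite esym msym eC mC /=.
         have : odd (t + k) = false.
           have -> : t + k = (j0 + i.-1 + l).*2 by rewrite /t /K /a Ll; lia.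
           by rewrite odd_double.
         by rewrite oddD; case: (odd t); case: (odd k).
      -- have kL : k = L.-1 by lia.
         rewrite (GP k); last by lia.
         rewrite hkL (GC L) // kL -/y eyb' /=.
         have -> : odd L.-1 by rewrite Ll; case: l Ll => [|l'] Ll; [lia|rewrite doubleS /= odd_double].
         rewrite /= eqbF_neg; apply/negP => hm.
         have mP' : m (P L.-1) (P L.-2) by rewrite msym.
         have hm' := mfun _ _ _ mP' hm.
         have hL2 : L.-2 < L by rewrite Ll; case: (l) Ll => [|l0] Ll; [lia|rewrite doubleS /=; lia].
         by move: (PC L.-2 (a + (K.-1 - L)) hL2); rewrite hm' eqxx.
    * rewrite hk modnn (GP 0); last by lia.
      rewrite (GC k); last by rewrite /K in hk *; lia.
      have -> : a + (K.-1 - k) = a by rewrite /K; lia.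
      rewrite esym exa /=.
      have h : k.+1 = (l + i).*2 by rewrite /K Ll in hk; lia.
      have : odd k.+1 = false by rewrite h odd_double.
      move=> /= /negbFE ->.
      rewrite /= eqbF_neg; apply/negP => hm.
      have hm' : m x (C a) by rewrite msym.
      have := mfun _ _ _ mP0 hm' => h1.
      by move: (PC 1 a ltac:(lia)); rewrite h1 eqxx.
- move=> z /mapP [k]; rewrite mem_iota add0n => /andP[_ kK] ->.
  case: (ltnP k L) => kL; first by left; exists k => //; exact: GP.
  by right; eexists; exact: GC.
Qed.

Lemma color_alt (T : finType) (e : rel T) (f : T -> bool) (D : nat -> T) L :
  (forall u v, e u v -> f u != f v) -> (forall k, k.+1 < L -> e (D k) (D k.+1)) ->
  forall k, k < L -> f (D k) = f (D 0) (+) odd k.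
Proof.
move=> hf eD; elim=> [|k IH] kL; first by rewrite addbF.
move: (hf _ _ (eD k kL)); rewrite IH; last by apply: ltnW.
by rewrite /=; case: (f (D 0)); case: (odd k); case: (f (D k.+1)).
Qed.

Theorem lemma1 (T : finType) (e m : rel T) (c p : seq T) (x y : T) :
  simple_graph e -> bipartite e -> matching e m ->
  M_cycle e m c -> M_path e m x y p ->
  [disjoint p & c] ->
  (size c)./2 < e_between2 e x y c ->
  forall i, 1 <= i <= (size c)./2 ->
  exists c' : seq T,
    [/\ M_cycle e m c', {subset c' <= p ++ c} & size c' = size p + 2 * i].
Proof.
move=> [eS _] [f hf] [msym _ mfun].
move=> /andP[/and3P[uc c3 cyc] /eqP cnt].
move=> /and5P[p2 /eqP hx /eqP ly up /andP[evp /allP allp]] disj Hcnt i Hi.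
set N := size c in c3 cnt Hcnt Hi.
pose C0 k := nth x c (k %% N).
have N0 : 0 < N by lia.
have C0mod : forall k, C0 (k %% N) = C0 k by move=> k; rewrite /C0 modn_mod.
have C0S : forall k, C0 (k %% N).+1 = C0 k.+1.
  by move=> k; rewrite /C0 -addn1 modnDml addn1.
have C0per : forall k, C0 (k + N) = C0 k by move=> k; rewrite /C0 modnDr.
have C0e : forall k, e (C0 k) (C0 k.+1).
  move=> k; rewrite -C0mod -C0S /C0 (modn_mod k N).
  by apply: (proj1 (cycle_nthP e x uc) cyc); apply: ltn_pmod.
have C0inj : forall a b, C0 a = C0 b -> a %% N = b %% N.
  by move=> a b /eqP; rewrite /C0 nth_uniq ?ltn_pmod // => /eqP.
have C0in : forall k, C0 k \in c by move=> k; rewrite /C0 mem_nth ?ltn_pmod.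
have fC0 := color_alt (L := N.+1) hf (fun k _ => C0e k).
have evN : ~~ odd N.
  have := fC0 N (ltnSn N); rewrite -{1}(add0n N) C0per.
  by case: (f (C0 0)); case: (odd N).
set n := N./2 in cnt Hcnt Hi.
have Nn : N = n.*2 by have := odd_double_half N; rewrite (negbTE evN) add0n.
have n0 : 0 < n by lia.
pose b k := m (C0 k) (C0 k.+1).
have bmod : forall k, b k = b (k %% N) by move=> k; rewrite /b C0mod C0S.
have bper : forall k, b (k + N) = b k by move=> k; rewrite /b C0per -addSn C0per.
have nocons : forall k, b k -> b k.+1 -> False.
  move=> k; rewrite /b => h1 h2.
  have h1' : m (C0 k.+1) (C0 k) by rewrite msym.
  have := C0inj _ _ (mfun _ _ _ h1' h2).
  move/eqP; rewrite -[k in k %% N]addn0 -[k.+2]addn2 eqn_modDl mod0n modn_small //.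
have sumb : \sum_(0 <= k < N) b k = n.
  rewrite -cnt (count_next_nth _ x uc) -/N count_iota_sum.
  apply: eq_big_nat => k /andP[_ kN].
  by rewrite /b /C0 (modn_small kN).
have pair1 : forall j, j < n -> b j.*2 + b j.*2.+1 = 1.
  apply: (@sum_tight (fun j => b j.*2 + b j.*2.+1)).
    move=> j _; case E1: (b j.*2); case E2: (b j.*2.+1) => //.
    by case: (nocons _ E1 E2).
  by have := sum_pairs b n; rewrite -Nn sumb => /esym.
have pair2 : forall j, j < n -> b j.*2.+1 + b j.*2.+2 = 1.
  apply: (@sum_tight (fun j => b j.*2.+1 + b j.*2.+2)).
    move=> j _; case E1: (b j.*2.+1); case E2: (b j.*2.+2) => //.
    by case: (nocons _ E1 E2).
  have SS : \sum_(0 <= k < N) b k.+1 = \sum_(0 <= k < N) b k.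
    apply: (@sum_shift1 b).
    by have := bper 0; rewrite add0n => ->.
  by have := sum_pairs (fun k => b k.+1) n; rewrite -Nn SS sumb => /esym.
have modS : forall k, (k %% N).+1 %% N = k.+1 %% N.
  by move=> k; rewrite -addn1 modnDml addn1.
have bS : forall k, b (k %% N).+1 = b k.+1 by move=> k; rewrite bmod modS -bmod.
have balt : forall k, b k.+1 = ~~ b k.
  move=> k; rewrite (bmod k) -bS.
  have kN : k %% N < N by apply: ltn_pmod.
  move: (k %% N) kN => k' kN.
  have hsum : b k' + b k'.+1 = 1.
    have := odd_double_half k'.
    case: (odd k') => /= hk.
    - move: hk; set j := k'./2 => hk; rewrite -hk add1n.
      apply: pair2; lia.
    - move: hk; set j := k'./2 => hk; rewrite -hk add0n.
      apply: pair1; lia.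
  by move: hsum; case: (b k'); case: (b k'.+1).
have [r Cr] : exists r, forall k, b (k + r) = ~~ odd k.
  have bk : forall k, b k = b 0 (+) odd k.
    elim=> [|k IH]; first by rewrite addbF.
    by rewrite balt IH /=; case: (b 0); case: (odd k).
  case B0: (b 0); [exists 0 | exists 1] => k;
    rewrite bk B0 ?addn0 ?addn1 /=; by case: (odd k).
pose C k := C0 (k + r).
have Ce : forall k, e (C k) (C k.+1) by move=> k; rewrite /C addSn.
have Cm : forall k, m (C k) (C k.+1) = ~~ odd k by move=> k; rewrite /C addSn -Cr.
have Cper : forall k, C (k + n.*2) = C k by move=> k; rewrite /C -Nn addnAC C0per.
have Cinj : forall a u v, u < n.*2 -> v < n.*2 -> C (a + u) = C (a + v) -> u = v.
  move=> a u v; rewrite -Nn => uN vN /C0inj; rewrite (addnAC a u) (addnAC a v) => /eqP.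
  by rewrite eqn_modDl !modn_small // => /eqP.
have CinC : forall k, C k \in c by move=> k; apply: C0in.
set L := size p in p2 evp allp *.
pose P k := nth x p k.
have eP : forall k, k.+1 < L -> e (P k) (P k.+1) && (m (P k) (P k.+1) == ~~ odd k).
  by move=> k kL; apply: allp; rewrite mem_iota; lia.
have Pinj : forall a b, a < L -> b < L -> P a = P b -> a = b.
  by move=> a b' aL bL /eqP; rewrite /P nth_uniq // => /eqP.
have PinP : forall a, a < L -> P a \in p by move=> a aL; apply: mem_nth.
have PC : forall a b, a < L -> P a != C b.
  move=> a b' aL; apply/eqP => h.
  by move: (disjointFr disj (PinP a aL)); rewrite h CinC.
have P0 : P 0 = x by rewrite /P nth0.
have PL : P L.-1 = y by rewrite /P nth_last.
have fP := color_alt hf (fun k kL => proj1 (andP (eP k kL))).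
have fy : f y = ~~ f x.
  rewrite -PL -P0 fP; last by lia.
  have -> : odd L.-1.
    have := odd_double_half L; rewrite (negbTE evp) add0n => hL.
    rewrite -hL; case: (L./2) hL => [|l] hL; first by lia.
    by rewrite doubleS /= odd_double.
  by rewrite addbT.
have fC : forall k, f (C k) = f (C 0) (+) odd k.
  by move=> k; apply: (color_alt (L := k.+1) hf (fun k _ => Ce k)).
have cntS : forall z, count (e z) c = \sum_(0 <= k < N) e z (C k).
  move=> z.
  transitivity (count (e z) (mkseq (nth x c) N)); first by rewrite /N mkseq_nth.
  rewrite /mkseq count_map count_iota_sum /C.
  rewrite (@sum_shift (fun k => e z (C0 k)) N) //; last by move=> k; rewrite C0per.
  by apply: eq_big_nat => k /andP[_ kN]; rewrite /C0 /= modn_small.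
have Hsum : n < \sum_(0 <= k < n.*2) (e x (C k) + e y (C k)).
  by rewrite big_split /= -Nn -!cntS.
have hxy : forall z k, e z (C k) -> f z = ~~ (f (C 0) (+) odd k).
  by move=> z k /hf; rewrite fC; case: (f z); case: (f (C 0) (+) odd k).
have subP : forall c' : seq T, (forall z, z \in c' -> (exists2 a, a < L & z = P a) \/ exists b, z = C b) ->
    {subset c' <= p ++ c}.
  move=> c' H z /H [[a aL ->]|[b' ->]]; rewrite mem_cat ?PinP ?CinC ?orbT //.
case Efx: (f x == f (C 0)).
- (* x adjacent only to odd positions: reverse the path *)
  pose P' k := P (L.-1 - k).
  have [l Ll] : exists l, L = l.*2.
    by exists L./2; have := odd_double_half L; rewrite (negbTE evp) add0n.
  have eP' : forall k, k.+1 < L -> e (P' k) (P' k.+1) && (m (P' k) (P' k.+1) == ~~ odd k).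
    move=> k kL; rewrite /P'.
    have -> : L.-1 - k = (L.-1 - k.+1).+1 by lia.
    set j := L.-1 - k.+1.
    have := eP j ltac:(lia); rewrite eS msym.
    have : odd (j + k) = false.
      have -> : j + k = (l.-1).*2 by rewrite /j Ll; lia.
      by rewrite odd_double.
    by rewrite oddD; case: (odd j); case: (odd k).
  have Pinj' : forall a b, a < L -> b < L -> P' a = P' b -> a = b.
    by move=> a b' aL bL /Pinj => h; have := h ltac:(lia) ltac:(lia); lia.
  have PC' : forall a b, a < L -> P' a != C b by move=> a b' aL; apply: PC; lia.
  have P'0 : P' 0 = y by rewrite /P' subn0.
  have P'L : P' L.-1 = x by rewrite /P' subnn.
  have hx' : forall k, e (P' 0) (C k) -> ~~ odd k.
    by move=> k; rewrite P'0 => /hxy; rewrite fy (eqP Efx); case: (f (C 0)); case: (odd k).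
  have hy' : forall k, e (P' L.-1) (C k) -> odd k.
    by move=> k; rewrite P'L => /hxy; rewrite (eqP Efx); case: (f (C 0)); case: (odd k).
  have Hsum' : n < \sum_(0 <= k < n.*2) (e (P' 0) (C k) + e (P' L.-1) (C k)).
    rewrite P'0 P'L (eq_bigr (fun k => e x (C k) + e y (C k))) // => k _.
    by rewrite addnC.
  have [c' [H1 H2 H3]] := @core T e m C P' n L i eS msym mfun n0 Ce Cm Cper Cinj
     p2 evp eP' Pinj' PC' hx' hy' Hsum' Hi.
  exists c'; split => //.
  apply: subP => z /H2 [[a aL ->]|]; last by right.
  by left; exists (L.-1 - a); [lia | ].
- have hx' : forall k, e (P 0) (C k) -> ~~ odd k.
    by move=> k; rewrite P0 => /hxy; move: Efx; case: (f x); case: (f (C 0)); case: (odd k).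
  have hy' : forall k, e (P L.-1) (C k) -> odd k.
    by move=> k; rewrite PL => /hxy; rewrite fy; move: Efx; case: (f x); case: (f (C 0)); case: (odd k).
  have Hsum' : n < \sum_(0 <= k < n.*2) (e (P 0) (C k) + e (P L.-1) (C k)).
    by rewrite P0 PL.
  have [c' [H1 H2 H3]] := @core T e m C P n L i eS msym mfun n0 Ce Cm Cper Cinj
     p2 evp eP Pinj PC hx' hy' Hsum' Hi.
  by exists c'; split => //; apply: subP.
Qed.
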